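(* Let $\mathcal{L}$ be a similarity type containing $0,+,-,\vee,\wedge,\bigvee^-$ (with $\bigvee^-$ of countably infinite arity), let $\mathbb{R}$ be an $\mathcal{L}$-algebra in which these symbols have their usual interpretations and $\bigvee^-(g,f_1,f_2,\dots)=\sup_{n\ge1}\{f_n\wedge g\}$, and let $\mathcal{Z}$ be the variety generated by this $\mathcal{L}$-algebra $\mathbb{R}$. If a quasi-equation with countably many premises $$[\tau_1=\rho_1,\ \tau_2=\rho_2,\ \dots]\Rightarrow\tau=\rho$$ ($\tau,\rho,\tau_n,\rho_n$ being $\mathcal{L}$-terms) holds in $\mathbb{R}$, then it holds in every $G\in\mathcal{Z}$.
   Context: A quasi-equation with countably many premises holds in an $\mathcal{L}$-algebra $A$ if for every assignment of the variables in $A$, whenever all premises $\tau_n=\rho_n$ hold, the conclusion $\tau=\rho$ holds. The variety generated by an algebra is the class of all algebras satisfying every equation (between possibly infinitary terms) true in it, equivalently its closure under products, subalgebras and homomorphic images. *)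

(* Defs.v *)
From Stdlib Require Import Reals.
Open Scope R_scope.

Inductive bsym : Type := s_zero | s_plus | s_neg | s_join | s_meet | s_bigv.

Definition bar (b : bsym) : Type :=
  match b with
  | s_zero => Empty_set
  | s_neg => unit
  | s_plus | s_join | s_meet => bool
  | s_bigv => nat   (* argument 0 is g, argument (S n) is f_(n+1) *)
  end.

(* A similarity type containing the basic symbols plus arbitrary extra
   symbols E with arbitrary arities ear. *)
Definition sym (E : Type) : Type := (bsym + E)%type.

Definition ar {E : Type} (ear : E -> Type) (s : sym E) : Type :=
  match s with inl b => bar b | inr e => ear e end.

Record alg (E : Type) (ear : E -> Type) : Type := Alg {
  carrier : Type;
  op : forall s : sym E, (ar ear s -> carrier) -> carrier }.
Arguments Alg {E ear} carrier op.
Arguments carrier {E ear} a.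
Arguments op {E ear} a s _.

Inductive term (E : Type) (ear : E -> Type) (X : Type) : Type :=
  | tvar : X -> term E ear X
  | tapp : forall s : sym E, (ar ear s -> term E ear X) -> term E ear X.
Arguments tvar {E ear X} _.
Arguments tapp {E ear X} s _.

Fixpoint eval {E : Type} {ear : E -> Type} {X : Type} (A : alg E ear)
  (v : X -> carrier A) (t : term E ear X) : carrier A :=
  match t with
  | tvar x => v x
  | tapp s f => op A s (fun i => eval A v (f i))
  end.

Definition eq_holds {E : Type} {ear : E -> Type} {X : Type} (A : alg E ear)
  (t u : term E ear X) : Prop :=
  forall v : X -> carrier A, eval A v t = eval A v u.

Definition qeq_holds {E : Type} {ear : E -> Type} {X : Type} (A : alg E ear)
  (ts us : nat -> term E ear X) (t u : term E ear X) : Prop :=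
  forall v : X -> carrier A,
    (forall n, eval A v (ts n) = eval A v (us n)) -> eval A v t = eval A v u.

Definition in_variety {E : Type} {ear : E -> Type} (A G : alg E ear) : Prop :=
  forall (X : Type) (t u : term E ear X), eq_holds A t u -> eq_holds G t u.

Definition usual_interp {E : Type} {ear : E -> Type}
  (opR : forall s : sym E, (ar ear s -> R) -> R) : Prop :=
  (forall f : ar ear (inl s_zero) -> R, opR (inl s_zero) f = 0) /\
  (forall f : ar ear (inl s_plus) -> R, opR (inl s_plus) f = f true + f false) /\
  (forall f : ar ear (inl s_neg) -> R, opR (inl s_neg) f = - f tt) /\
  (forall f : ar ear (inl s_join) -> R, opR (inl s_join) f = Rmax (f true) (f false)) /\
  (forall f : ar ear (inl s_meet) -> R, opR (inl s_meet) f = Rmin (f true) (f false)) /\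
  (forall f : ar ear (inl s_bigv) -> R,
     is_lub (fun y => exists n : nat, y = Rmin (f (S n)) (f O)) (opR (inl s_bigv) f)).

(* Main.v *)
Require Import Defs.
From Stdlib Require Import Reals.
From Stdlib Require Import Lra Lia Classical FunctionalExtensionality.
Open Scope R_scope.

Fixpoint subst {E : Type} {ear : E -> Type} {X Y : Type} (sg : Y -> term E ear X)
  (t : term E ear Y) : term E ear X :=
  match t with
  | tvar y => sg y
  | tapp s f => tapp s (fun i => subst sg (f i))
  end.

Lemma eval_subst {E : Type} {ear : E -> Type} {X Y : Type} (A : alg E ear)
  (v : X -> carrier A) (sg : Y -> term E ear X) (t : term E ear Y) :
  eval A v (subst sg t) = eval A (fun y => eval A v (sg y)) t.
Proof.
  induction t as [y|s f IH]; simpl; [reflexivity|].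
  f_equal. apply functional_extensionality. intro i. apply IH.
Qed.

Ltac abstr := repeat match goal with |- context [eval ?A ?w ?t] =>
  let a := fresh "e" in set (a := (eval A w t : R)) in * end;
  try match goal with |- @eq _ ?x ?y => change (@eq R x y) end.

Definition tplus {E ear X} (x y : term E ear X) : term E ear X :=
  tapp (inl s_plus) (fun i : bool => if i then x else y).
Definition tneg {E ear X} (x : term E ear X) : term E ear X :=
  tapp (inl s_neg) (fun _ : unit => x).
Definition tjoin {E ear X} (x y : term E ear X) : term E ear X :=
  tapp (inl s_join) (fun i : bool => if i then x else y).
Definition tmeet {E ear X} (x y : term E ear X) : term E ear X :=
  tapp (inl s_meet) (fun i : bool => if i then x else y).
Definition tbigv {E ear X} (g : term E ear X) (F : nat -> term E ear X) : term E ear X :=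
  tapp (inl s_bigv) (fun i : nat => match i with O => g | S n => F n end).
Definition tabsd {E ear X} (x y : term E ear X) : term E ear X :=
  tjoin (tplus x (tneg y)) (tneg (tplus x (tneg y))).
Fixpoint tnmul {E ear X} (n : nat) (x : term E ear X) : term E ear X :=
  match n with O => x | S k => tplus x (tnmul k x) end.

Definition Y := (bool + (nat * bool))%type.
Definition vp : Y := inl true.
Definition vq : Y := inl false.
Definition va (n : nat) : Y := inr (n, true).
Definition vb (n : nat) : Y := inr (n, false).

Definition tD {E ear} (n : nat) : term E ear Y := tabsd (tvar (va n)) (tvar (vb n)).
Fixpoint tM {E ear} (n : nat) : term E ear Y :=
  match n with O => tD O | S k => tjoin (tM k) (tD (S k)) end.
Definition tS {E ear} : term E ear Y :=
  tbigv (tabsd (tvar vp) (tvar vq)) (fun n => tnmul n (tM n)).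
Definition tT {E ear} : term E ear Y :=
  tplus (tvar vq) (tjoin (tmeet (tplus (tvar vp) (tneg (tvar vq))) tS) (tneg tS)).

Lemma evR_plus {E ear X} {opR} (H : usual_interp (E:=E) (ear:=ear) opR) (w : X -> R) x y :
  eval (Alg R opR) w (tplus x y) = eval (Alg R opR) w x + eval (Alg R opR) w y.
Proof. destruct H as (_&H&_). simpl. rewrite H. reflexivity. Qed.
Lemma evR_neg {E ear X} {opR} (H : usual_interp (E:=E) (ear:=ear) opR) (w : X -> R) x :
  eval (Alg R opR) w (tneg x) = - eval (Alg R opR) w x.
Proof. destruct H as (_&_&H&_). simpl. rewrite H. reflexivity. Qed.
Lemma evR_join {E ear X} {opR} (H : usual_interp (E:=E) (ear:=ear) opR) (w : X -> R) x y :
  eval (Alg R opR) w (tjoin x y) = Rmax (eval (Alg R opR) w x) (eval (Alg R opR) w y).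
Proof. destruct H as (_&_&_&H&_). simpl. rewrite H. reflexivity. Qed.
Lemma evR_meet {E ear X} {opR} (H : usual_interp (E:=E) (ear:=ear) opR) (w : X -> R) x y :
  eval (Alg R opR) w (tmeet x y) = Rmin (eval (Alg R opR) w x) (eval (Alg R opR) w y).
Proof. destruct H as (_&_&_&_&H&_). simpl. rewrite H. reflexivity. Qed.
Lemma evR_bigv {E ear X} {opR} (H : usual_interp (E:=E) (ear:=ear) opR) (w : X -> R) g F :
  is_lub (fun y => exists n, y = Rmin (eval (Alg R opR) w (F n)) (eval (Alg R opR) w g))
    (eval (Alg R opR) w (tbigv g F)).
Proof. destruct H as (_&_&_&_&_&H). exact (H (fun i : nat => eval (Alg R opR) w (match i with O => g | S n => F n end))). Qed.
Lemma evR_absd {E ear X} {opR} (H : usual_interp (E:=E) (ear:=ear) opR) (w : X -> R) x y :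
  eval (Alg R opR) w (tabsd x y) = Rabs (eval (Alg R opR) w x - eval (Alg R opR) w y).
Proof.
  unfold tabsd. rewrite (evR_join H), !(evR_plus H), !(evR_neg H), (evR_plus H), (evR_neg H).
  abstr.
  unfold Rmax, Rabs. destruct Rle_dec; destruct Rcase_abs; lra.
Qed.
Lemma evR_nmul {E ear X} {opR} (H : usual_interp (E:=E) (ear:=ear) opR) (w : X -> R) n x :
  eval (Alg R opR) w (tnmul n x) = INR (S n) * eval (Alg R opR) w x.
Proof.
  induction n; simpl tnmul. simpl INR. abstr. ring.
  rewrite (evR_plus H), IHn. rewrite (S_INR (S n)). abstr. ring.
Qed.

Lemma evR_M_ge {E ear} {opR} (H : usual_interp (E:=E) (ear:=ear) opR) (w : Y -> R) n :
  0 <= eval (Alg R opR) w (tM n) /\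
  forall k, (k <= n)%nat -> eval (Alg R opR) w (tD k) <= eval (Alg R opR) w (tM n).
Proof.
  induction n as [|n [IH1 IH2]]; simpl tM.
  - unfold tD; rewrite (evR_absd H). split. apply Rabs_pos.
    intros k Hk. replace k with O by lia. unfold tD; rewrite (evR_absd H). lra.
  - rewrite (evR_join H). split.
    + eapply Rle_trans; [exact IH1| apply Rmax_l].
    + intros k Hk. destruct (Nat.eq_dec k (S n)) as [->|Hne].
      * apply Rmax_r.
      * eapply Rle_trans; [apply IH2; lia| apply Rmax_l].
Qed.

Lemma lemA {E ear} {opR} (H : usual_interp (E:=E) (ear:=ear) opR) (w : Y -> R) :
  (forall n, w (va n) = w (vb n)) -> eval (Alg R opR) w tT = w vq.
Proof.
  intro Hw.
  assert (HM : forall n, eval (Alg R opR) w (tM n) = 0).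
  { induction n; simpl tM; [|rewrite (evR_join H), IHn]; unfold tD; rewrite (evR_absd H);
    simpl; rewrite Hw; unfold Rminus; rewrite Rplus_opp_r, Rabs_R0;
    try (unfold Rmax; destruct Rle_dec; lra); reflexivity. }
  assert (HS : eval (Alg R opR) w tS = 0).
  { pose proof (evR_bigv H w (tabsd (tvar vp) (tvar vq)) (fun n => tnmul n (tM n))) as L.
    apply (is_lub_u _ _ _ L). rewrite (evR_absd H).
    assert (Hr : 0 <= Rabs (eval (Alg R opR) w (tvar vp) - eval (Alg R opR) w (tvar vq))) by apply Rabs_pos.
    split.
    - intros y [n ->]. rewrite (evR_nmul H), HM, Rmult_0_r. apply Rmin_l.
    - intros b Hb. apply Hb. exists O. rewrite (evR_nmul H), HM, Rmult_0_r.
      unfold Rmin; destruct Rle_dec; lra. }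
  unfold tT. rewrite !(evR_plus H), (evR_join H), (evR_meet H), !(evR_neg H), !(evR_plus H), !(evR_neg H), HS.
  simpl eval. unfold Rmax, Rmin. repeat destruct Rle_dec; lra.
Qed.

Lemma lemB {E ear} {opR} (H : usual_interp (E:=E) (ear:=ear) opR) (w : Y -> R) k :
  w (va k) <> w (vb k) -> eval (Alg R opR) w tT = w vp.
Proof.
  intro Hk.
  set (r := Rabs (w vp - w vq)).
  set (d := Rabs (w (va k) - w (vb k))).
  assert (Hd : 0 < d). { apply Rabs_pos_lt. lra. }
  assert (Hr : 0 <= r) by apply Rabs_pos.
  assert (HS : eval (Alg R opR) w tS = r).
  { pose proof (evR_bigv H w (tabsd (tvar vp) (tvar vq)) (fun n => tnmul n (tM n))) as L.
    apply (is_lub_u _ _ _ L). rewrite (evR_absd H). simpl eval. fold r.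
    split.
    - intros y [n ->]. apply Rmin_r.
    - intros b Hb.
      destruct (archimed_cor1 (d / (r + 1))) as [N [HN1 HN2]].
      { apply Rdiv_lt_0_compat; lra. }
      assert (HINR : 0 < INR N) by (apply lt_0_INR; lia).
      assert (Hbig : r < INR N * d).
      { assert (/ INR N * (r+1) < d / (r+1) * (r+1)) by (apply Rmult_lt_compat_r; lra).
        field_simplify in H0; try lra.
        assert (r + 1 < d * INR N).
        { replace (r+1) with ((r+1)/INR N * INR N) by (field; lra).
          apply Rmult_lt_compat_r; lra. }
        lra. }
      destruct (evR_M_ge H w (N + k)) as [M0 Mk].
      assert (HDk : eval (Alg R opR) w (tD k) = d) by (unfold tD; rewrite (evR_absd H); reflexivity).
      specialize (Mk k ltac:(lia)). rewrite HDk in Mk.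
      assert (HF : r <= eval (Alg R opR) w (tnmul (N + k) (tM (N + k)))).
      { rewrite (evR_nmul H). assert (INR N <= INR (S (N + k))) by (apply le_INR; lia).
        assert (INR N * d <= INR (S (N+k)) * d) by (apply Rmult_le_compat_r; lra).
        assert (INR (S (N+k)) * d <= INR (S (N+k)) * eval (Alg R opR) w (tM (N + k))).
        { apply Rmult_le_compat_l; [apply pos_INR | lra]. }
        lra. }
      apply Hb. exists (N + k)%nat. unfold Rmin; destruct Rle_dec; lra. }
  unfold tT. rewrite !(evR_plus H), (evR_join H), (evR_meet H), !(evR_neg H), !(evR_plus H), !(evR_neg H), HS.
  simpl eval. abstr.
  assert (Hra: r = w vp - w vq \/ r = -(w vp - w vq)) by (unfold r, Rabs; destruct Rcase_abs; auto).
  clearbody r. unfold Rmax, Rmin. repeat destruct Rle_dec; lra.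
Qed.

Theorem mainTheorem17 (E : Type) (ear : E -> Type)
  (opR : forall s : sym E, (ar ear s -> R) -> R)
  (Husual : usual_interp opR)
  (X : Type) (ts us : nat -> term E ear X) (t u : term E ear X) :
  qeq_holds (Alg R opR) ts us t u ->
  forall G : alg E ear, in_variety (Alg R opR) G -> qeq_holds G ts us t u.
Proof.
  intros Hq G HG v Hprem.
  set (sg := fun y : Y => match y with
             | inl true => t | inl false => u
             | inr (n, true) => ts n | inr (n, false) => us n end).
  set (tau := fun y : Y => match y with
             | inr (n, false) => tvar (va n) | y => tvar y end : term E ear Y).
  assert (E1 : eq_holds (Alg R opR) (subst sg (tvar vp)) (subst sg tT)).
  { intro vR. rewrite (eval_subst _ vR sg tT).
    set (wR := fun y => eval (Alg R opR) vR (sg y)).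
    change (eval (Alg R opR) vR (subst sg (tvar vp))) with (wR vp).
    destruct (classic (forall n, wR (va n) = wR (vb n))) as [Hall|Hn].
    - rewrite (lemA Husual wR Hall). apply Hq. exact Hall.
    - apply not_all_ex_not in Hn. destruct Hn as [k Hk].
      rewrite (lemB Husual wR k Hk). reflexivity. }
  assert (E2 : eq_holds (Alg R opR) (subst tau tT) (tvar vq)).
  { intro vR. rewrite eval_subst. apply (lemA Husual). intro n. reflexivity. }
  apply HG in E1. apply HG in E2.
  specialize (E1 v). rewrite (eval_subst _ v sg tT) in E1.
  change (eval G v (subst sg (tvar vp))) with (eval G v t) in E1.
  rewrite E1.
  set (wG := fun y => eval G v (sg y)).
  specialize (E2 wG). rewrite (eval_subst _ wG tau tT) in E2.
  replace (fun y => eval G wG (tau y)) with wG in E2.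
  - rewrite E2. reflexivity.
  - apply functional_extensionality. intros [b|[n []]]; try reflexivity.
    unfold wG; simpl. symmetry. apply Hprem.
Qed.
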